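(* Let $n$ be a positive integer, let $\hat y\in\mathbb{R}^n$ satisfy $\mathrm{rank}(\mathcal{H}_2(\hat y))=2$, and let $y^*$ be an optimal solution of $$\min_{y\in\mathbb{R}^n}\ \tfrac12\|y-\hat y\|^2\quad\text{s.t.}\quad\mathrm{rank}(\mathcal{H}_2(y))\le1.$$ Then $\mathrm{rank}(\mathcal{H}_2(y^* ))=1$.
   Context: For $x\in\mathbb{R}^n$, $\mathcal{H}_2(x)\in\mathbb{R}^{2\times(n-1)}$ is the Hankel matrix with $(i,j)$ entry $x(i+j-1)$, i.e. first row $(x(1),\dots,x(n-1))$ and second row $(x(2),\dots,x(n))$. *)

(* Defs.v *)
From mathcomp Require Import all_boot all_order all_algebra.
From mathcomp Require Import reals.
Set Implicit Arguments. Unset Strict Implicit. Unset Printing Implicit Defensive.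
Import Order.TTheory GRing.Theory Num.Theory.
Local Open Scope ring_scope.

(* Hankel matrix H_2(x) in R^{2 x (n-1)}: entry (i,j) (0-based) is x(i+j),
   i.e. first row x(1..n-1), second row x(2..n) in 1-based indexing.
   Index i+j is always < n for i < 2, j < n-1 when n >= 1, so the
   fallback 0 is never used in that case. *)
Definition hankel2 (R : nzRingType) (n : nat) (x : 'rV[R]_n) : 'M[R]_(2, n.-1) :=
  \matrix_(i < 2, j < n.-1)
    (if @insub nat (fun k => (k < n)%N) 'I_n (i + j)%N is Some k then x 0 k else 0).

Definition hobj (R : realType) (n : nat) (yhat y : 'rV[R]_n) : R :=
  (1 / 2) * \sum_(k < n) (y 0 k - yhat 0 k) ^+ 2.

Definition hankel_rank1_optimal (R : realType) (n : nat) (yhat ystar : 'rV[R]_n) : Prop :=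
  (\rank (hankel2 ystar) <= 1)%N /\
  forall y : 'rV[R]_n, (\rank (hankel2 y) <= 1)%N -> hobj yhat ystar <= hobj yhat y.

(* Main.v *)
Require Import Defs.
From mathcomp Require Import all_boot all_order all_algebra.
From mathcomp Require Import reals.
From mathcomp Require Import ring lra zify.
Import Order.TTheory GRing.Theory Num.Theory.
Local Open Scope ring_scope.

Lemma hankel2E (R : nzRingType) n (x : 'rV[R]_n) (i : 'I_2) (j : 'I_n.-1)
  (h : (i + j < n)%N) : hankel2 x i j = x 0 (Ordinal h).
Proof.
rewrite mxE (insubT (fun k => (k < n)%N) h) /=.
by congr (x 0 _); apply: val_inj.
Qed.

Lemma geom_rank (R : realType) n (c r : R) : (0 < n)%N ->
  (\rank (hankel2 (\row_(k < n) (c * r ^+ k)%R)) <= 1)%N.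
Proof.
move=> n0.
have -> : hankel2 (\row_(k < n) (c * r ^+ k)) =
   (\col_(i < 2) r ^+ i) *m (\row_(j < n.-1) (c * r ^+ j)).
  apply/matrixP => i j.
  have h : (i + j < n)%N.
    have := ltn_ord i; have := ltn_ord j; move: n0; lia.
  rewrite hankel2E !mxE big_ord1 !mxE /= exprD; lra.
exact: leq_trans (mxrankM_maxl _ _) (rank_leq_col _).
Qed.

Theorem proposition4p7 (R : realType) (n : nat) (yhat ystar : 'rV[R]_n) :
  (0 < n)%N ->
  \rank (hankel2 yhat) = 2%N ->
  hankel_rank1_optimal yhat ystar ->
  \rank (hankel2 ystar) = 1%N.
Proof.
move=> n0 rk2 [rk1 opt].
have n3 : (2 <= n.-1)%N by rewrite -rk2 rank_leq_col.
apply/eqP; rewrite eqn_leq rk1 /= lt0n mxrank_eq0; apply/negP => /eqP H0.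
have ys0 : forall k : 'I_n, ystar 0 k = 0.
  move=> k.
  have [kl|kl] := ltnP k n.-1.
    have h : (0 + Ordinal kl < n)%N by rewrite /=; lia.
    have := @hankel2E _ _ ystar (@Ordinal 2 0 isT) (Ordinal kl) h.
    rewrite H0 mxE => ->; congr (ystar 0 _); exact: val_inj.
  have jl : (n.-2 < n.-1)%N by lia.
  have h : (((@Ordinal 2 1 isT) : nat) + Ordinal jl < n)%N by rewrite /=; lia.
  have := @hankel2E _ _ ystar (@Ordinal 2 1 isT) (Ordinal jl) h.
  rewrite H0 mxE => ->; congr (ystar 0 _); apply: val_inj => /=; have := ltn_ord k; lia.
have [k yk] : exists k : 'I_n, yhat 0 k != 0.
  case: (pickP (fun k : 'I_n => yhat 0 k != 0)) => [k yk|Hall]; first by exists k.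
  exfalso.
  have : hankel2 yhat = 0.
    apply/matrixP => i j; rewrite !mxE.
    by case: insub => [k|] //; move/negbFE/eqP: (Hall k).
  by move/eqP; rewrite -mxrank_eq0 rk2.
pose p := \poly_(i < n) (if insub i is Some k then yhat 0 k else 0).
have p0 : p != 0.
  apply/eqP => /(congr1 (fun q : {poly R} => q`_k)).
  rewrite coef_poly ltn_ord coef0 (insubT (fun i => (i < n)%N) (ltn_ord k)).
  move=> e; move/eqP: yk; apply; rewrite -e; congr (yhat 0 _); exact: val_inj.
have [r pr] : exists r : R, p.[r] != 0.
  case: (boolP (all (root p) [seq i%:R | i <- iota 0 n])) => [Hall|]; last first.
    by case/allPn => x _ Hx; exists x.
  exfalso.
  have := max_poly_roots p0 Hall.
  rewrite size_map size_iota.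
  rewrite map_inj_uniq ?iota_uniq; last exact: (mulrIn (oner_neq0 R)).
  move=> /(_ isT) lt; have := size_poly n (fun i => if insub i is Some k then yhat 0 k else 0).
  rewrite -/p => sp; move: lt; by rewrite ltnNge sp.
pose P := \sum_(i < n) yhat 0 i * r ^+ i.
pose Q := \sum_(i < n) (r ^+ i) ^+ 2.
pose S := \sum_(i < n) (yhat 0 i) ^+ 2.
have PE : p.[r] = P.
  rewrite horner_poly; apply: eq_bigr => i _.
  by rewrite (insubT (fun i => (i < n)%N) (ltn_ord i)); congr (yhat 0 _ * _); exact: val_inj.
have Qpos : 0 < Q.
  rewrite /Q (bigD1 (Ordinal n0)) //= expr0 expr1n.
  have : 0 <= \sum_(i < n | i != Ordinal n0) (r ^+ i) ^+ 2 by apply: sumr_ge0 => i _; exact: sqr_ge0.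
  lra.
pose c := P / Q.
pose y := \row_(k < n) (c * r ^+ k).
have := opt y (@geom_rank R n c r n0).
have -> : hobj yhat ystar = 1 / 2 * S.
  rewrite /hobj /S; congr (_ * _); apply: eq_bigr => i _; rewrite ys0; lra.
have -> : hobj yhat y = 1 / 2 * (c ^+ 2 * Q - 2 * c * P + S).
  rewrite /hobj; congr (_ * _).
  rewrite /Q /P /S mulr_sumr mulr_sumr -sumrN -!big_split /=.
  apply: eq_bigr => i _; rewrite mxE; lra.
have Pn : P != 0 by rewrite -PE.
have : c ^+ 2 * Q - 2 * c * P = - (P ^+ 2 / Q).
  rewrite /c; field; by rewrite gt_eqF.
have P2 : 0 < P ^+ 2 by rewrite lt_def sqr_ge0 andbT sqrf_eq0.
have : 0 < P ^+ 2 / Q by apply: divr_gt0.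
lra.
Qed.
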